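(* For every Sauer Matrix $S$ of size $k$, the set \[ \mathcal{P}(S) = \{ r \in [0,1]^k : \Delta_\ell(r+S) \le 1 \text{ for each } 1 \le \ell \le k\} \] is a polytope.
   Context: For a real matrix $M$ and $\ell\ge1$, $\Delta_\ell(M)$ denotes the maximum of $|\det(B)|$ over all $\ell\times\ell$ submatrices $B$ of $M$. For $r\in\mathbb{R}^k$ and a matrix $S$ with $k$ rows and columns $S_1,\dots,S_N$, $r+S$ is the matrix with columns $r+S_i$. A Sauer Matrix of size $k$ is a matrix $S\in\{-1,0,1\}^{k\times 2^k}$ such that every subset of $[k]$ is the support (set of nonzero coordinates) of exactly one column, the nonzero entries being arbitrary elements of $\{-1,1\}$. *)

(* Defs.v *)
From mathcomp Require Import all_boot all_order all_algebra.
From mathcomp Require Import reals.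
Set Implicit Arguments. Unset Strict Implicit. Unset Printing Implicit Defensive.
Import Order.TTheory GRing.Theory Num.Theory.
Local Open Scope ring_scope.

(* A submatrix is given by an injective choice of l rows and l columns
   (reordering rows/columns only changes the sign of the determinant).
   The maximum of an empty family is 0 (never relevant when l <= #rows,#cols). *)
Definition Delta (R : realType) (l m n : nat) (M : 'M[R]_(m, n)) : R :=
  \big[Num.max/0]_(f : {ffun 'I_l -> 'I_m} | injectiveb f)
    \big[Num.max/0]_(g : {ffun 'I_l -> 'I_n} | injectiveb g)
      `|\det (mxsub f g M)|.

Definition addcol (R : realType) (k N : nat) (r : 'cV[R]_k) (S : 'M[R]_(k, N))
  : 'M[R]_(k, N) := \matrix_(i, j) (r i 0 + S i j).

Definition col_support (R : realType) (k N : nat) (S : 'M[R]_(k, N)) (j : 'I_N)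
  : {set 'I_k} := [set i | S i j != 0].

Definition sauer_matrix (R : realType) (k : nat) (S : 'M[R]_(k, 2 ^ k)) : Prop :=
  (forall i j, S i j = -1 \/ S i j = 0 \/ S i j = 1) /\
  (forall A : {set 'I_k}, #|[set j | col_support S j == A]| = 1%N).

Definition PS (R : realType) (k : nat) (S : 'M[R]_(k, 2 ^ k)) (r : 'cV[R]_k) : Prop :=
  (forall i, 0 <= r i 0 <= 1) /\
  (forall l : nat, (1 <= l <= k)%N -> Delta l (addcol r S) <= 1).

Definition polytope (R : realType) (k : nat) (P : 'cV[R]_k -> Prop) : Prop :=
  (exists (n : nat) (A : 'M[R]_(n, k)) (b : 'cV[R]_n),
      forall x, P x <-> (forall i, (A *m x) i 0 <= b i 0)) /\
  (exists B : R, forall x, P x -> forall i, `|x i 0| <= B).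

(* Main.v *)
Require Import Defs.
From mathcomp Require Import all_boot all_order all_algebra.
From mathcomp Require Import reals.
From mathcomp Require Import ring lra.
Set Implicit Arguments. Unset Strict Implicit. Unset Printing Implicit Defensive.
Import Order.TTheory GRing.Theory Num.Theory.
Local Open Scope ring_scope.

Section Aux.
Variable R : realType.
Variable k : nat.

Definition polyh (P : 'cV[R]_k -> Prop) : Prop :=
  exists (n : nat) (A : 'M[R]_(n, k)) (b : 'cV[R]_n),
      forall x, P x <-> (forall i, (A *m x) i 0 <= b i 0).

Lemma polyh_ext P Q : polyh P -> (forall x, P x <-> Q x) -> polyh Q.
Proof.
move=> [n [A [b H]]] E; exists n, A, b => x; rewrite -E; exact: H.
Qed.

Lemma polyh_true : polyh (fun _ => True).
Proof.
exists 0%N, 0, 0 => x; split => // _ [] //.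
Qed.

Lemma polyh_half (w : 'I_k -> R) c :
  polyh (fun x => \sum_j w j * x j 0 <= c).
Proof.
exists 1%N, (\matrix_(i, j) w j), (const_mx c) => x; split.
- move=> H i; rewrite !mxE; rewrite ord1.
  by under eq_bigr do rewrite mxE.
- move=> /(_ 0); rewrite !mxE.
  by under eq_bigr do rewrite mxE.
Qed.

Lemma polyh_and P Q : polyh P -> polyh Q -> polyh (fun x => P x /\ Q x).
Proof.
move=> [n1 [A1 [b1 H1]]] [n2 [A2 [b2 H2]]].
exists (n1 + n2)%N, (col_mx A1 A2), (col_mx b1 b2) => x.
rewrite H1 H2 mul_col_mx; split.
- move=> [h1 h2] i; rewrite -[i]splitK; case: (split i) => j /=.
  + by rewrite !col_mxEu.
  + by rewrite !col_mxEd.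
- move=> h; split => i.
  + by have := h (lshift n2 i); rewrite !col_mxEu.
  + by have := h (rshift n1 i); rewrite !col_mxEd.
Qed.

Lemma polyh_impl (b : bool) P : polyh P -> polyh (fun x => b -> P x).
Proof.
case: b => H.
- apply: (polyh_ext H) => x; split => [h _ | h]; [exact: h | exact: h isT].

- by eapply polyh_ext; [exact: polyh_true|] => x; split.
Qed.

Lemma polyh_seq (T : eqType) (s : seq T) (P : T -> 'cV[R]_k -> Prop) :
  (forall t, polyh (P t)) -> polyh (fun x => forall t, t \in s -> P t x).
Proof.
move=> H; elim: s => [|a s IH].
- by eapply polyh_ext; [exact: polyh_true|] => x; split.
- apply: (polyh_ext (polyh_and (H a) IH)) => x; split.
  + move=> [h1 h2] t; rewrite inE => /orP [/eqP -> //|]; exact: h2.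
  + move=> h; split; first by apply: h; rewrite inE eqxx.
    by move=> t ts; apply: h; rewrite inE ts orbT.
Qed.

Lemma polyh_fin (T : finType) (P : T -> 'cV[R]_k -> Prop) :
  (forall t, polyh (P t)) -> polyh (fun x => forall t, P t x).
Proof.
move=> H; apply: (polyh_ext (polyh_seq (enum T) H)) => x; split.
- by move=> h t; apply: h; rewrite mem_enum.
- by move=> h t _.
Qed.


Lemma polyh_le (c0 c : R) (w : 'I_k -> R) :
  polyh (fun x => c0 + \sum_j w j * x j 0 <= c).
Proof.
eapply polyh_ext; first exact: (polyh_half w (c - c0)).
move=> x /=; split => H; lra.
Qed.

Lemma polyh_ge (c0 c : R) (w : 'I_k -> R) :
  polyh (fun x => c <= c0 + \sum_j w j * x j 0).
Proof.
eapply polyh_ext; first exact: (polyh_half (fun j => - w j) (c0 - c)).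
move=> x /=.
have -> : \sum_j - w j * x j 0 = - \sum_j w j * x j 0.
  by rewrite -sumrN; apply: eq_bigr => j _; rewrite mulNr.
split => H; lra.
Qed.

Lemma sum_delta (x : 'cV[R]_k) i : \sum_j (j == i)%:R * x j 0 = x i 0.
Proof.
rewrite (bigD1 i) //= eqxx mul1r big1 ?addr0 // => j /negbTE ->.
by rewrite mul0r.
Qed.

End Aux.

Definition Emx (R : realType) n : 'M[R]_n.+1 :=
  \matrix_(i, j) ((i == j)%:R - ((i == 0) && (j != 0))%:R).

Lemma det_Emx (R : realType) n : \det (Emx R n) = 1.
Proof.
rewrite -det_tr det_trig.
  by rewrite big1 // => i _; rewrite !mxE eqxx andbN subr0.
apply/is_trig_mxP => i j lt; rewrite !mxE.
have -> : (j == i) = false.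
  by apply/negbTE; rewrite -val_eqE /= neq_ltn lt orbT.
have -> : (j == 0) = false.
  by apply/negbTE; rewrite -val_eqE /= -lt0n (leq_ltn_trans _ lt).
by rewrite subrr.
Qed.

Lemma mulEmx (R : realType) n (A : 'M[R]_n.+1) i j :
  (A *m Emx R n) i j = A i j - (j != 0)%:R * A i 0.
Proof.
rewrite !mxE.
under eq_bigr do rewrite mxE mulrBr.
rewrite sumrB (bigD1 j) //= eqxx mulr1 big1 ?addr0; last first.
  by move=> t /negbTE; rewrite eq_sym => ->; rewrite mulr0.
rewrite (bigD1 0) //= big1 ?addr0; last first.
  by move=> t /negbTE ->; rewrite mulr0.
by rewrite mulrC.
Qed.

Lemma det_affine (R : realType) k N l (f : 'I_l -> 'I_k) (g : 'I_l -> 'I_N)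
  (S : 'M[R]_(k, N)) :
  exists c (w : 'I_k -> R), forall r,
    \det (mxsub f g (addcol r S)) = c + \sum_j w j * r j 0.
Proof.
case: l f g => [|n] f g.
  exists 1, (fun _ => 0) => r; rewrite det_mx00 big1 ?addr0 // => j _.
  by rewrite mul0r.
pose M r := mxsub f g (addcol r S).
have sub A i a b : row' i (col' 0 A) a b = A (lift i a) (lift (0 : 'I_n.+1) b).
  by rewrite !mxE.
pose d i := cofactor (M 0 *m Emx R n) i 0.
have cof r i : cofactor (M r *m Emx R n) i 0 = d i.
  rewrite /d /cofactor; congr (_ * \det _); apply/matrixP => a b.
  rewrite !sub !mulEmx.
  have -> : (lift ord0 b != ord0) = true by rewrite eq_sym neq_lift.
  have -> : (true%:R : R) = 1 by []. 
  by rewrite !mxE !add0r; ring.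
exists (\sum_i S (f i) (g 0) * d i), (fun j => \sum_i (f i == j)%:R * d i) => r.
have dM : \det (M r) = \det (M r *m Emx R n) by rewrite det_mulmx det_Emx mulr1.
rewrite -/(M r) dM.
rewrite (expand_det_col _ 0).
under eq_bigr do rewrite cof mulEmx eqxx mul0r subr0 !mxE mulrDl.
rewrite big_split /= addrC; congr (_ + _).
under [RHS]eq_bigr do rewrite mulr_suml.
rewrite exchange_big /=; apply: eq_bigr => i _.
rewrite (bigD1 (f i)) //= eqxx mul1r big1 ?addr0 1?mulrC //.
by move=> j /negbTE; rewrite eq_sym => ->; rewrite !mul0r.
Qed.

Theorem proposition4p1 (R : realType) (k : nat) (S : 'M[R]_(k, 2 ^ k)) :
  sauer_matrix S -> polytope (PS S).
Proof.
move=> _; split; last first.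
  exists 1 => x [H _] i; have /andP [h0 h1] := H i.
  by rewrite ger0_norm.
pose Q (x : 'cV[R]_k) :=
  (forall i : 'I_k, (0 <= x i 0) /\ (x i 0 <= 1)) /\
  (forall l : 'I_k.+1, (1 <= l)%N -> forall f : {ffun 'I_l -> 'I_k}, injectiveb f ->
     forall g : {ffun 'I_l -> 'I_(2 ^ k)}, injectiveb g ->
     (-1 <= \det (mxsub f g (addcol x S))) /\ (\det (mxsub f g (addcol x S)) <= 1)).
have PQ : polyh Q.
  apply: polyh_and.
    apply: polyh_fin => i; apply: polyh_and.
      eapply polyh_ext; first exact: (polyh_ge 0 0 (fun j => (j == i)%:R)).
      by move=> x /=; rewrite sum_delta add0r.
    eapply polyh_ext; first exact: (polyh_le 0 1 (fun j => (j == i)%:R)).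
    by move=> x /=; rewrite sum_delta add0r.
  apply: polyh_fin => l; apply: polyh_impl.
  apply: polyh_fin => f; apply: polyh_impl.
  apply: polyh_fin => g; apply: polyh_impl.
  have [c [w Hw]] := det_affine f g S.
  eapply polyh_ext; first exact: (polyh_and (polyh_ge c (-1) w) (polyh_le c 1 w)).
  by move=> x /=; rewrite Hw.
apply: (polyh_ext PQ) => x; split.
- move=> [H1 H2]; split.
    by move=> i; have [-> ->] := H1 i.
  move=> l /andP [l1 lk].
  have H := H2 (Ordinal (lk : (l < k.+1)%N)) l1.
  apply/bigmax_leP; split => // f fi.
  apply/bigmax_leP; split => // g gi.
  by rewrite ler_norml; have [-> ->] := H f fi g gi.
- move=> [H1 H2]; split.
    by move=> i; have /andP [-> ->] := H1 i.
  move=> l l1 f fi g gi.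
  have := H2 l; rewrite l1 -ltnS ltn_ord => /(_ isT) /bigmax_leP [_ /(_ f fi)].
  move=> /bigmax_leP [_ /(_ g gi)].
  by rewrite ler_norml => /andP.
Qed.
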